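(* For all $t\in\mathbb N$ we have $M_t=(0,0,\tfrac12,-\tfrac12,0,0)^T$ and \[ V_{2t}=\frac12\begin{pmatrix}1&1&0&0&0&0\\1&1&0&0&0&0\\1&1&0&0&0&0\\0&0&1&1&0&0\\0&0&1&1&0&0\\0&0&1&1&0&0\end{pmatrix}V_t+\frac14\begin{pmatrix}0\\0\\1\\4\\1\\9\end{pmatrix},\qquad V_{2t+1}=\frac12\begin{pmatrix}0&0&1&1&0&0\\0&0&1&1&0&0\\0&0&1&1&0&0\\0&0&0&0&1&1\\0&0&0&0&1&1\\0&0&0&0&1&1\end{pmatrix}V_t+\frac14\begin{pmatrix}1\\9\\4\\1\\0\\0\end{pmatrix}, \] with $V_0=\frac14(0,0,1,9,6,14)^T$.
   Context: Let $\mathsf r(n)$ be the number of (overlapping) occurrences of $\mathtt{11}$ in the binary expansion of $n\in\mathbb N=\{0,1,\dots\}$, and $d(t,n)=\mathsf r(n+t)-\mathsf r(n)$. Let $a_t(k)$, $b_t(k)$ ($k\in\mathbb Z$) be the asymptotic densities (which exist and define probability distributions on $\mathbb Z$) of $\{n:d(t,2n)=k\}$ and $\{n:d(t,2n+1)=k\}$. Let $m_t^\alpha=\sum_k k a_t(k)$, $m_t^\beta=\sum_k k b_t(k)$, $v_t^\alpha=\sum_k(k-m_t^\alpha)^2a_t(k)$, $v_t^\beta=\sum_k(k-m_t^\beta)^2b_t(k)$, and $M_t=(m^\alpha_{2t},m^\beta_{2t},m^\alpha_{2t+1},m^\beta_{2t+1},m^\alpha_{2t+2},m^\beta_{2t+2})^T$,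 $V_t=(v^\alpha_{2t},v^\beta_{2t},v^\alpha_{2t+1},v^\beta_{2t+1},v^\alpha_{2t+2},v^\beta_{2t+2})^T$. *)

(* Defs.v *)
From Stdlib Require Import Reals ZArith Arith List Bool.
From Coquelicot Require Import Coquelicot.
Open Scope R_scope.

Definition r (n : nat) : nat :=
  length (filter (fun i => andb (Nat.testbit n i) (Nat.testbit n (S i)))
                 (seq 0 (S (Nat.log2 n)))).

Definition d (t n : nat) : Z := (Z.of_nat (r (n + t)) - Z.of_nat (r n))%Z.

Definition density (P : nat -> bool) : R :=
  real (Lim_seq (fun N => INR (length (filter P (seq 0 N))) / INR N)).

Definition a (t : nat) (k : Z) : R := density (fun n => Z.eqb (d t (2 * n)) k).
Definition b (t : nat) (k : Z) : R := density (fun n => Z.eqb (d t (2 * n + 1)) k).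

(* Sum over k in Z of f k, computed as f 0 + sum_{j>=1} (f j + f (-j)).
   For the absolutely summable families occurring here this is the usual sum. *)
Definition zsum (f : Z -> R) : R :=
  Series (fun j : nat => if (Nat.eqb j 0) then f 0%Z
                         else f (Z.of_nat j) + f (- Z.of_nat j)%Z).

Definition m_alpha (t : nat) : R := zsum (fun k => IZR k * a t k).
Definition m_beta  (t : nat) : R := zsum (fun k => IZR k * b t k).
Definition v_alpha (t : nat) : R := zsum (fun k => (IZR k - m_alpha t) ^ 2 * a t k).
Definition v_beta  (t : nat) : R := zsum (fun k => (IZR k - m_beta t) ^ 2 * b t k).

Definition Mvec (t : nat) (i : nat) : R :=
  match i with
  | 0 => m_alpha (2 * t) | 1 => m_beta (2 * t)
  | 2 => m_alpha (2 * t + 1) | 3 => m_beta (2 * t + 1)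
  | 4 => m_alpha (2 * t + 2) | _ => m_beta (2 * t + 2)
  end.
Definition Vvec (t : nat) (i : nat) : R :=
  match i with
  | 0 => v_alpha (2 * t) | 1 => v_beta (2 * t)
  | 2 => v_alpha (2 * t + 1) | 3 => v_beta (2 * t + 1)
  | 4 => v_alpha (2 * t + 2) | _ => v_beta (2 * t + 2)
  end.

Definition Mat0 (i j : nat) : R :=
  if Nat.ltb i 3 then (if Nat.ltb j 2 then 1 else 0)
  else (if orb (Nat.eqb j 2) (Nat.eqb j 3) then 1 else 0).
Definition Mat1 (i j : nat) : R :=
  if Nat.ltb i 3 then (if orb (Nat.eqb j 2) (Nat.eqb j 3) then 1 else 0)
  else (if orb (Nat.eqb j 4) (Nat.eqb j 5) then 1 else 0).
Definition mv (A : nat -> nat -> R) (v : nat -> R) (i : nat) : R :=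
  sum_f_R0 (fun j => A i j * v j) 5.
Definition vec6 (x0 x1 x2 x3 x4 x5 : R) (i : nat) : R :=
  match i with 0 => x0 | 1 => x1 | 2 => x2 | 3 => x3 | 4 => x4 | _ => x5 end.

(* Main.v *)
Require Import Defs.
From Stdlib Require Import Reals ZArith Arith List Bool Lia Lra FunctionalExtensionality.
From Coquelicot Require Import Coquelicot.
Open Scope R_scope.

Lemma len_filter_map_S (f : nat -> bool) (l : list nat) :
  length (filter f (map S l)) = length (filter (fun i => f (S i)) l).
Proof. induction l as [|x l IH]; simpl; auto. destruct (f (S x)); simpl; auto. Qed.

Lemma fc (f : nat -> bool) x l : filter f (x::l) = if f x then x :: filter f l else filter f l.
Proof. reflexivity. Qed.

Lemma r_double n : r (2 * n) = r n.
Proof.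
  destruct (Nat.eq_dec n 0) as [->|Hn]. reflexivity.
  unfold r. rewrite Nat.log2_double by lia.
  set (L := Nat.log2 n).
  change (seq 0 (S (S L))) with (0%nat :: seq 1 (S L)).
  rewrite fc. rewrite Nat.testbit_even_0. rewrite ?Bool.andb_false_l, ?Bool.andb_true_l.
  rewrite <- seq_shift, len_filter_map_S. f_equal. apply filter_ext.
  intro i. rewrite !Nat.testbit_even_succ by lia. reflexivity.
Qed.

Lemma r_sdouble n : r (2 * n + 1) = (r n + if Nat.odd n then 1 else 0)%nat.
Proof.
  destruct (Nat.eq_dec n 0) as [->|Hn]. reflexivity.
  unfold r. rewrite Nat.log2_succ_double by lia.
  set (L := Nat.log2 n).
  change (seq 0 (S (S L))) with (0%nat :: seq 1 (S L)).
  rewrite fc. rewrite Nat.testbit_odd_0.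
  rewrite (Nat.testbit_odd_succ _ 0) by lia. rewrite Nat.bit0_odd. rewrite ?Bool.andb_false_l, ?Bool.andb_true_l.
  rewrite <- seq_shift.
  assert (E: length (filter (fun i => Nat.testbit (2 * n + 1) i && Nat.testbit (2 * n + 1) (S i)) (map S (seq 0 (S L))))
    = length (filter (fun i => Nat.testbit n i && Nat.testbit n (S i)) (seq 0 (S L)))).
  { rewrite len_filter_map_S. f_equal. apply filter_ext. intro i. rewrite !Nat.testbit_odd_succ by lia. reflexivity. }
  destruct (Nat.odd n); [change (length (0%nat :: ?l)) with (S (length l))|]; rewrite E; lia.
Qed.

Definition oddZ (n : nat) : Z := if Nat.odd n then 1%Z else 0%Z.
Definition evenZ (n : nat) : Z := if Nat.odd n then 0%Z else 1%Z.

Lemma r_sdoubleZ n : Z.of_nat (r (2 * n + 1)) = (Z.of_nat (r n) + oddZ n)%Z.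
Proof. rewrite r_sdouble. unfold oddZ. destruct (Nat.odd n); lia. Qed.

Lemma oddZ_2 m t : oddZ (2 * m + t) = oddZ t.
Proof. unfold oddZ. rewrite Nat.add_comm, Nat.odd_add_mul_2. reflexivity. Qed.

Lemma d_e_e t m : d (2 * t) (2 * (2 * m)) = d t (2 * m).
Proof. unfold d. replace (2 * (2 * m) + 2 * t)%nat with (2 * (2 * m + t))%nat by lia.
  rewrite !r_double. reflexivity. Qed.

Lemma d_e_o t m : d (2 * t) (2 * (2 * m + 1)) = d t (2 * m + 1).
Proof. unfold d. replace (2 * (2 * m + 1) + 2 * t)%nat with (2 * (2 * m + 1 + t))%nat by lia.
  rewrite !r_double. reflexivity. Qed.

Lemma d_e_1e t m : d (2 * t) (2 * (2 * m) + 1) = (d t (2 * m) + oddZ t)%Z.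
Proof. unfold d. replace (2 * (2 * m) + 1 + 2 * t)%nat with (2 * (2 * m + t) + 1)%nat by lia.
  rewrite !r_sdoubleZ, oddZ_2. replace (oddZ (2*m)) with 0%Z.
  2:{ unfold oddZ. rewrite <- (Nat.add_0_r (2*m)), Nat.add_comm, Nat.odd_add_mul_2. reflexivity. }
  lia. Qed.

Lemma oddZ_0 m : oddZ (2 * m) = 0%Z.
Proof. rewrite <- (Nat.add_0_r (2*m)), oddZ_2. reflexivity. Qed.
Lemma oddZ_S t : oddZ (1 + t) = evenZ t.
Proof. unfold oddZ, evenZ. rewrite Nat.add_1_l, Nat.odd_succ, <- Nat.negb_odd. destruct (Nat.odd t); reflexivity. Qed.
Lemma oddZ_1 m : oddZ (2 * m + 1) = 1%Z.
Proof. rewrite oddZ_2. reflexivity. Qed.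

Lemma d_e_1o t m : d (2 * t) (2 * (2 * m + 1) + 1) = (d t (2 * m + 1) + evenZ t - 1)%Z.
Proof. unfold d. replace (2 * (2 * m + 1) + 1 + 2 * t)%nat with (2 * (2 * m + (1 + t)) + 1)%nat by lia.
  rewrite !r_sdoubleZ, oddZ_2, oddZ_S, oddZ_1.
  replace (2 * m + (1 + t))%nat with (2 * m + 1 + t)%nat by lia. lia. Qed.

Lemma d_o_e t m : d (2 * t + 1) (2 * (2 * m)) = (d t (2 * m) + oddZ t)%Z.
Proof. unfold d. replace (2 * (2 * m) + (2 * t + 1))%nat with (2 * (2 * m + t) + 1)%nat by lia.
  rewrite !r_sdoubleZ, oddZ_2, r_double. lia. Qed.

Lemma d_o_o t m : d (2 * t + 1) (2 * (2 * m + 1)) = (d t (2 * m + 1) + evenZ t)%Z.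
Proof. unfold d. replace (2 * (2 * m + 1) + (2 * t + 1))%nat with (2 * (2 * m + (1 + t)) + 1)%nat by lia.
  rewrite (r_sdoubleZ (2 * m + (1 + t))), oddZ_2, oddZ_S, r_double.
  replace (2 * m + (1 + t))%nat with (2 * m + 1 + t)%nat by lia. lia. Qed.

Lemma d_o_1e t m : d (2 * t + 1) (2 * (2 * m) + 1) = d (t + 1) (2 * m).
Proof. unfold d. replace (2 * (2 * m) + 1 + (2 * t + 1))%nat with (2 * (2 * m + (t + 1)))%nat by lia.
  rewrite !r_sdoubleZ, oddZ_0, r_double. lia. Qed.

Lemma d_o_1o t m : d (2 * t + 1) (2 * (2 * m + 1) + 1) = (d (t + 1) (2 * m + 1) - 1)%Z.
Proof. unfold d. replace (2 * (2 * m + 1) + 1 + (2 * t + 1))%nat with (2 * (2 * m + 1 + (t + 1)))%nat by lia.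
  rewrite !r_sdoubleZ, oddZ_1, r_double. lia. Qed.

Lemma d_0 n : d 0 n = 0%Z.
Proof. unfold d. rewrite Nat.add_0_r. lia. Qed.

Lemma d_1_e n : d 1 (2 * n) = oddZ n.
Proof. unfold d. rewrite r_sdoubleZ, r_double. lia. Qed.

Lemma d_1_le n : (d 1 n <= 1)%Z.
Proof.
  induction n as [n IH] using (well_founded_induction lt_wf).
  destruct (Nat.Even_or_Odd n) as [[m ->]|[m ->]].
  - rewrite d_1_e. unfold oddZ; destruct (Nat.odd m); lia.
  - destruct (Nat.eq_dec m 0) as [->|Hm]. { unfold d. simpl. unfold r. simpl. lia. }
    assert (d 1 (2 * m + 1) = d 1 m - oddZ m)%Z.
    { unfold d. replace (2 * m + 1 + 1)%nat with (2 * (m + 1))%nat by lia.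
      rewrite r_double, r_sdoubleZ. lia. }
    rewrite H. specialize (IH m ltac:(lia)). unfold oddZ; destruct (Nat.odd m); lia.
Qed.
Definition cnt (P : nat -> bool) (N : nat) : nat := length (filter P (seq 0 N)).
Definition has_dens (P : nat -> bool) (l : R) : Prop :=
  is_lim_seq (fun N => INR (cnt P N) / INR N) l.

Lemma cnt_S P N : cnt P (S N) = (cnt P N + if P N then 1 else 0)%nat.
Proof. unfold cnt. rewrite seq_S, filter_app, length_app. simpl. destruct (P N); simpl; lia. Qed.

Lemma cnt_le P N : (cnt P N <= N)%nat.
Proof. induction N. unfold cnt; simpl; lia. rewrite cnt_S. destruct (P N); lia. Qed.

Lemma cnt_ext P Q N : (forall n, P n = Q n) -> cnt P N = cnt Q N.
Proof. intro H. unfold cnt. rewrite (filter_ext P Q H). reflexivity. Qed.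

Lemma has_dens_ext P Q l : (forall n, P n = Q n) -> has_dens P l -> has_dens Q l.
Proof. intros H. unfold has_dens. apply is_lim_seq_ext. intro N. rewrite (cnt_ext P Q N H). reflexivity. Qed.

Lemma has_dens_unique P l : has_dens P l -> density P = l.
Proof. intro H. unfold density. apply is_lim_seq_unique in H. unfold cnt in H. rewrite H. reflexivity. Qed.

Lemma has_dens_bound P l : has_dens P l -> 0 <= l <= 1.
Proof.
  intro H. split.
  - assert (Hl := is_lim_seq_le (fun _ => 0) (fun N => INR (cnt P N) / INR N) 0 l). simpl in Hl. apply Hl; auto.
    2: apply is_lim_seq_const.
    intro N. destruct N. simpl. unfold Rdiv. rewrite Rmult_0_l. lra.
    apply Rdiv_le_0_compat. apply pos_INR. apply lt_0_INR. lia.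
  - assert (Hl := is_lim_seq_le (fun N => INR (cnt P N) / INR N) (fun _ => 1) l 1). simpl in Hl. apply Hl; auto.
    2: apply is_lim_seq_const.
    intro N. destruct N. simpl. unfold Rdiv. rewrite Rmult_0_l. lra.
    assert (0 < INR (S N)) by (apply lt_0_INR; lia).
    unfold Rdiv. rewrite <- (Rinv_r (INR (S N))) by lra. apply Rmult_le_compat_r. left; apply Rinv_0_lt_compat; lra. apply le_INR, cnt_le.
Qed.

Lemma lim_inv_S : is_lim_seq (fun m => / INR (S m)) 0.
Proof.
  assert (H := is_lim_seq_inv INR p_infty is_lim_seq_INR ltac:(discriminate)).
  simpl in H. apply (is_lim_seq_incr_1 (fun n => / INR n) 0). exact H.
Qed.

Lemma even_odd_lim (u : nat -> R) (l : R) :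
  is_lim_seq (fun m => u (2 * m)%nat) l -> is_lim_seq (fun m => u (2 * m + 1)%nat) l -> is_lim_seq u l.
Proof.
  intros He Ho. apply is_lim_seq_spec in He, Ho. apply is_lim_seq_spec.
  intro eps. destruct (He eps) as [N1 H1]. destruct (Ho eps) as [N2 H2].
  exists (2 * N1 + 2 * N2 + 1)%nat. intros n Hn.
  destruct (Nat.Even_or_Odd n) as [[m ->]|[m ->]].
  - apply H1. lia.
  - apply H2. lia.
Qed.

Lemma odd_step_bound (x n e : R) : 1 <= n -> 0 <= x <= 2 * n -> 0 <= e <= 1 ->
  Rabs ((x + e) / (2 * n + 1) - x / (2 * n)) <= 2 * / (n + 1).
Proof.
  intros Hn Hx He.
  replace ((x + e) / (2 * n + 1) - x / (2 * n)) with ((2 * n * e - x) / (2 * n * (2 * n + 1))) by (field; lra).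
  rewrite Rabs_div by nra. rewrite (Rabs_right (2 * n * (2 * n + 1))) by nra.
  apply Rle_trans with (2 * n / (2 * n * (2 * n + 1))).
  - unfold Rdiv. apply Rmult_le_compat_r. left. apply Rinv_0_lt_compat. nra.
    apply Rabs_le. nra.
  - replace (2 * n / (2 * n * (2 * n + 1))) with (/ (2 * n + 1)) by (field; lra).
    rewrite <- (Rmult_1_l (/ (2 * n + 1))). 
    apply Rmult_le_compat. lra. left; apply Rinv_0_lt_compat; lra. lra.
    apply Rinv_le_contravar; lra.
Qed.

Lemma dens_even P (l : R) : is_lim_seq (fun m => INR (cnt P (2 * m)) / INR (2 * m)) l -> has_dens P l.
Proof.
  intro H. apply even_odd_lim; auto.
  apply is_lim_seq_le_le with (u := fun m => INR (cnt P (2 * m)) / INR (2 * m) - 2 * / INR (S m))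
    (w := fun m => INR (cnt P (2 * m)) / INR (2 * m) + 2 * / INR (S m)).
  2:{ pose proof (is_lim_seq_minus' _ _ l (2*0) H (is_lim_seq_mult' (fun _ => 2) _ 2 0 (is_lim_seq_const 2) lim_inv_S)) as K.
        replace (l - 2*0) with l in K by ring. exact K. }
  2:{ pose proof (is_lim_seq_plus' _ _ l (2*0) H (is_lim_seq_mult' (fun _ => 2) _ 2 0 (is_lim_seq_const 2) lim_inv_S)) as K.
        replace (l + 2*0) with l in K by ring. exact K. }
  intro m. cbv beta. destruct m as [|m].
  - replace (2*0+1)%nat with 1%nat by lia. replace (2*0)%nat with 0%nat by lia.
    unfold cnt; simpl. destruct (P 0%nat); simpl; unfold Rdiv; rewrite ?Rmult_0_l, ?Rinv_1; lra.
  - set (k := (2 * S m)%nat). replace (k + 1)%nat with (S k) by lia. rewrite cnt_S.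
    assert (Hb := odd_step_bound (INR (cnt P k)) (INR (S m)) (INR (if P k then 1%nat else 0%nat))).
    assert (Ek : INR k = 2 * INR (S m)) by (unfold k; rewrite mult_INR; reflexivity).
    rewrite plus_INR, S_INR, Ek. rewrite (S_INR k), Ek.
    assert (1 <= INR (S m)) by (rewrite S_INR; assert (0 <= INR m) by apply pos_INR; lra).
    assert (Hc := cnt_le P k). apply le_INR in Hc. rewrite Ek in Hc.
    assert (HH : Rabs ((INR (cnt P k) + INR (if P k then 1%nat else 0%nat)) / (2 * INR (S m) + 1) -
         INR (cnt P k) / (2 * INR (S m))) <= 2 * / (INR (S m) + 1)).
    { apply Hb. lra. split. apply pos_INR. lra. destruct (P k); simpl; lra. }
    apply Rabs_le_between in HH. lra.
Qed.

Definition il (P Q : nat -> bool) (n : nat) : bool :=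
  if Nat.even n then P (Nat.div2 n) else Q (Nat.div2 n).

Lemma il_e P Q m : il P Q (2 * m) = P m.
Proof. unfold il. rewrite Nat.div2_double, Nat.even_mul. reflexivity. Qed.
Lemma il_o P Q m : il P Q (2 * m + 1) = Q m.
Proof. unfold il. rewrite Nat.add_1_r, Nat.div2_succ_double, Nat.even_succ, Nat.odd_mul. reflexivity. Qed.

Lemma cnt_il P Q m : cnt (il P Q) (2 * m) = (cnt P m + cnt Q m)%nat.
Proof.
  induction m. reflexivity.
  replace (2 * S m)%nat with (S (2 * m + 1)) by lia. rewrite cnt_S, Nat.add_1_r, cnt_S, IHm.
  rewrite <- (Nat.add_1_r (2 * m)), il_o, il_e, !cnt_S. destruct (P m), (Q m); lia.
Qed.

Lemma dens_il P Q p q : has_dens P p -> has_dens Q q -> has_dens (il P Q) ((p + q) / 2).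
Proof.
  intros HP HQ. apply dens_even.
  apply is_lim_seq_ext_loc with (u := fun m => (INR (cnt P m) / INR m + INR (cnt Q m) / INR m) * / 2).
  - exists 1%nat. intros m Hm. rewrite cnt_il, plus_INR, mult_INR. simpl.
    assert (0 < INR m) by (apply lt_0_INR; lia). field. lra.
  - apply is_lim_seq_mult'. apply is_lim_seq_plus'; assumption. apply is_lim_seq_const.
Qed.

Lemma dens_const (b : bool) : has_dens (fun _ => b) (if b then 1 else 0).
Proof.
  unfold has_dens. apply is_lim_seq_ext_loc with (u := fun _ => if b then 1 else 0).
  2: apply is_lim_seq_const.
  exists 1%nat. intros N HN. assert (0 < INR N) by (apply lt_0_INR; lia).
  assert (cnt (fun _ => b) N = if b then N else 0%nat).
  { clear. induction N. destruct b; reflexivity. rewrite cnt_S, IHN. destruct b; lia. }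
  rewrite H0. destruct b; simpl; field; lra.
Qed.

Definition A (t : nat) (k : Z) (n : nat) : bool := Z.eqb (d t (2 * n)) k.
Definition B (t : nat) (k : Z) (n : nat) : bool := Z.eqb (d t (2 * n + 1)) k.

Lemma eqb_shift x c k : Z.eqb (x + c) k = Z.eqb x (k - c).
Proof. destruct (Z.eqb_spec (x + c) k), (Z.eqb_spec x (k - c)); lia. Qed.

Lemma A_2t t k n : A (2 * t) k n = il (A t k) (B t k) n.
Proof. destruct (Nat.Even_or_Odd n) as [[m ->]|[m ->]].
  - rewrite il_e. unfold A. rewrite d_e_e. reflexivity.
  - rewrite il_o. unfold A, B. rewrite d_e_o. reflexivity. Qed.

Lemma B_2t t k n : B (2 * t) k n = il (A t (k - oddZ t)) (B t (k - evenZ t + 1)) n.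
Proof. destruct (Nat.Even_or_Odd n) as [[m ->]|[m ->]].
  - rewrite il_e. unfold A, B. rewrite d_e_1e, eqb_shift. reflexivity.
  - rewrite il_o. unfold B. rewrite d_e_1o.
    replace (d t (2 * m + 1) + evenZ t - 1)%Z with (d t (2 * m + 1) + (evenZ t - 1))%Z by ring.
    rewrite eqb_shift. f_equal. ring. Qed.

Lemma A_2t1 t k n : A (2 * t + 1) k n = il (A t (k - oddZ t)) (B t (k - evenZ t)) n.
Proof. destruct (Nat.Even_or_Odd n) as [[m ->]|[m ->]].
  - rewrite il_e. unfold A. rewrite d_o_e, eqb_shift. reflexivity.
  - rewrite il_o. unfold A, B. rewrite d_o_o, eqb_shift. reflexivity. Qed.

Lemma B_2t1 t k n : B (2 * t + 1) k n = il (A (t + 1) k) (B (t + 1) (k + 1)) n.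
Proof. destruct (Nat.Even_or_Odd n) as [[m ->]|[m ->]].
  - rewrite il_e. unfold A, B. rewrite d_o_1e. reflexivity.
  - rewrite il_o. unfold B. rewrite d_o_1o.
    replace (d (t + 1) (2 * m + 1) - 1)%Z with (d (t + 1) (2 * m + 1) + (-1))%Z by ring.
    rewrite eqb_shift. f_equal. Qed.

Lemma A_0 k n : A 0 k n = Z.eqb 0 k.
Proof. unfold A. rewrite d_0. reflexivity. Qed.
Lemma B_0 k n : B 0 k n = Z.eqb 0 k.
Proof. unfold B. rewrite d_0. reflexivity. Qed.
Lemma A_1 k n : A 1 k n = il (fun _ => Z.eqb 0 k) (fun _ => Z.eqb 1 k) n.
Proof. destruct (Nat.Even_or_Odd n) as [[m ->]|[m ->]].
  - rewrite il_e. unfold A. rewrite d_1_e, oddZ_0. reflexivity.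
  - rewrite il_o. unfold A. rewrite d_1_e, oddZ_1. reflexivity. Qed.
Lemma B_1_hi k n : (2 <= k)%Z -> B 1 k n = false.
Proof. intro Hk. unfold B. pose proof (d_1_le (2 * n + 1)). destruct (Z.eqb_spec (d 1 (2 * n + 1)) k); lia. Qed.

Lemma dens_ex_B1 : forall k, exists l, has_dens (B 1 k) l.
Proof.
  assert (H : forall j : nat, forall k, (k >= 2 - Z.of_nat j)%Z -> exists l, has_dens (B 1 k) l).
  { induction j as [|j IH]; intros k Hk.
    - exists 0. apply has_dens_ext with (fun _ => false). intro n. rewrite B_1_hi; auto; lia.
      apply (dens_const false).
    - destruct (Z_le_gt_dec (2 - Z.of_nat j) k). apply IH; lia.
      destruct (IH (k + 1)%Z ltac:(lia)) as [l1 H1].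
      assert (H0 : exists l0, has_dens (A 1 k) l0).
      { eexists. apply (has_dens_ext (il (fun _ => Z.eqb 0 k) (fun _ => Z.eqb 1 k))). intro n. symmetry. apply (A_1 k n).
        apply dens_il; apply dens_const. }
      destruct H0 as [l0 H0].
      exists ((l0 + l1) / 2). apply (has_dens_ext (il (A 1 k) (B 1 (k + 1)))). intro n. symmetry.
      apply (B_2t1 0 k n).
      apply dens_il; assumption. }
  intro k. apply (H (Z.to_nat (2 - k))). lia.
Qed.

Lemma dens_ex : forall t k, (exists l, has_dens (A t k) l) /\ (exists l, has_dens (B t k) l).
Proof.
  intro t. induction t as [t IH] using (well_founded_induction lt_wf). intro k.
  destruct (Nat.Even_or_Odd t) as [[s ->]|[s ->]].
  - destruct (Nat.eq_dec s 0) as [->|Hs].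
    + split; eexists.
      * apply (has_dens_ext (fun _ => Z.eqb 0 k)). intro n. symmetry. apply (A_0 k n). apply dens_const.
      * apply (has_dens_ext (fun _ => Z.eqb 0 k)). intro n. symmetry. apply (B_0 k n). apply dens_const.
    + destruct (IH s ltac:(lia) k) as [[la Ha] [lb Hb]].
      destruct (IH s ltac:(lia) (k - oddZ s)%Z) as [[la' Ha'] _].
      destruct (IH s ltac:(lia) (k - evenZ s + 1)%Z) as [_ [lb' Hb']].
      split; eexists.
      * apply (has_dens_ext (il (A s k) (B s k))). intro n. symmetry. apply (A_2t s k n). apply dens_il; eassumption.
      * apply (has_dens_ext (il (A s (k - oddZ s)) (B s (k - evenZ s + 1)))). intro n. symmetry. apply (B_2t s k n). apply dens_il; eassumption.
  - destruct (Nat.eq_dec s 0) as [->|Hs].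
    + split.
      * eexists. apply (has_dens_ext (il (fun _ => Z.eqb 0 k) (fun _ => Z.eqb 1 k))). intro n. symmetry. apply (A_1 k n). apply dens_il; apply dens_const.
      * apply dens_ex_B1.
    + destruct (IH s ltac:(lia) (k - oddZ s)%Z) as [[la Ha] _].
      destruct (IH s ltac:(lia) (k - evenZ s)%Z) as [_ [lb Hb]].
      destruct (IH (s + 1)%nat ltac:(lia) k) as [[la' Ha'] _].
      destruct (IH (s + 1)%nat ltac:(lia) (k + 1)%Z) as [_ [lb' Hb']].
      split; eexists.
      * apply (has_dens_ext (il (A s (k - oddZ s)) (B s (k - evenZ s)))). intro n. symmetry. apply (A_2t1 s k n). apply dens_il; eassumption.
      * apply (has_dens_ext (il (A (s+1) k) (B (s+1) (k + 1)))). intro n. symmetry. apply (B_2t1 s k n). apply dens_il; eassumption.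
Qed.

Lemma dens_spec t k : has_dens (A t k) (a t k) /\ has_dens (B t k) (b t k).
Proof.
  destruct (dens_ex t k) as [[la Ha] [lb Hb]]. split.
  - unfold a. change (density (fun n => Z.eqb (d t (2 * n)) k)) with (density (A t k)).
    rewrite (has_dens_unique _ _ Ha). exact Ha.
  - unfold b. change (density (fun n => Z.eqb (d t (2 * n + 1)) k)) with (density (B t k)).
    rewrite (has_dens_unique _ _ Hb). exact Hb.
Qed.

Lemma dens_of P l : has_dens P l -> forall Q, (forall n, Q n = P n) -> density Q = l.
Proof. intros H Q HQ. apply has_dens_unique. eapply has_dens_ext. 2: exact H. intro n; auto. Qed.

Lemma a_2t t k : a (2 * t) k = (a t k + b t k) / 2.
Proof. apply (dens_of (il (A t k) (B t k))). apply dens_il; [apply (proj1 (dens_spec _ _))|apply (proj2 (dens_spec _ _))]. intro n. apply A_2t. Qed.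
Lemma b_2t t k : b (2 * t) k = (a t (k - oddZ t) + b t (k - evenZ t + 1)) / 2.
Proof. apply (dens_of (il (A t (k - oddZ t)) (B t (k - evenZ t + 1)))). apply dens_il; [apply (proj1 (dens_spec _ _))|apply (proj2 (dens_spec _ _))]. intro n. apply B_2t. Qed.
Lemma a_2t1 t k : a (2 * t + 1) k = (a t (k - oddZ t) + b t (k - evenZ t)) / 2.
Proof. apply (dens_of (il (A t (k - oddZ t)) (B t (k - evenZ t)))). apply dens_il; [apply (proj1 (dens_spec _ _))|apply (proj2 (dens_spec _ _))]. intro n. apply A_2t1. Qed.
Lemma b_2t1 t k : b (2 * t + 1) k = (a (t + 1) k + b (t + 1) (k + 1)) / 2.
Proof. apply (dens_of (il (A (t + 1) k) (B (t + 1) (k + 1)))). apply dens_il; [apply (proj1 (dens_spec _ _))|apply (proj2 (dens_spec _ _))]. intro n. apply B_2t1. Qed.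
Lemma a_0 k : a 0 k = if Z.eqb 0 k then 1 else 0.
Proof. apply (dens_of (fun _ => Z.eqb 0 k)). apply dens_const. intro n. apply A_0. Qed.
Lemma b_0 k : b 0 k = if Z.eqb 0 k then 1 else 0.
Proof. apply (dens_of (fun _ => Z.eqb 0 k)). apply dens_const. intro n. apply B_0. Qed.
Lemma a_1 k : a 1 k = ((if Z.eqb 0 k then 1 else 0) + (if Z.eqb 1 k then 1 else 0)) / 2.
Proof. apply (dens_of (il (fun _ => Z.eqb 0 k) (fun _ => Z.eqb 1 k))). apply dens_il; apply dens_const. intro n. apply A_1. Qed.
Lemma b_1_hi k : (2 <= k)%Z -> b 1 k = 0.
Proof. intro Hk. apply (dens_of (fun _ => false) 0 (dens_const false)). intro n. apply B_1_hi; auto. Qed.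
Lemma a_bnd t k : 0 <= a t k <= 1.
Proof. apply (has_dens_bound (A t k)). apply (proj1 (dens_spec _ _)). Qed.
Lemma b_bnd t k : 0 <= b t k <= 1.
Proof. apply (has_dens_bound (B t k)). apply (proj2 (dens_spec _ _)). Qed.

Definition zs (f : Z -> R) (j : nat) : R :=
  if Nat.eqb j 0 then f 0%Z else f (Z.of_nat j) + f (- Z.of_nat j)%Z.
Lemma zsum_zs f : zsum f = Series (zs f).
Proof. reflexivity. Qed.
Definition summ (f : Z -> R) : Prop := ex_series (zs (fun k => Rabs (f k))).

Lemma zs_abs_nonneg f j : 0 <= zs (fun k => Rabs (f k)) j.
Proof. unfold zs. destruct (Nat.eqb j 0). apply Rabs_pos. pose proof (Rabs_pos (f (Z.of_nat j))). pose proof (Rabs_pos (f (- Z.of_nat j)%Z)). lra. Qed.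

Lemma zs_abs_le f j : Rabs (zs f j) <= zs (fun k => Rabs (f k)) j.
Proof. unfold zs. destruct (Nat.eqb j 0). lra. apply Rabs_triang. Qed.

Lemma ser_le (u v : nat -> R) : (forall n, Rabs (u n) <= v n) -> ex_series v -> ex_series u.
Proof. intros H Hv. apply (ex_series_le u v); auto. Qed.

Lemma summ_ex f : summ f -> ex_series (zs f).
Proof. intro H. apply (ser_le _ _ (zs_abs_le f) H). Qed.

Lemma zsum_ext f g : (forall k, f k = g k) -> zsum f = zsum g.
Proof. intro H. rewrite !zsum_zs. apply Series_ext. intro n. unfold zs. rewrite !H. reflexivity. Qed.

Lemma summ_ext f g : (forall k, f k = g k) -> summ f -> summ g.
Proof. intro H. unfold summ. apply ex_series_ext. intro n. unfold zs. rewrite !H. reflexivity. Qed.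

Lemma summ_le f g : (forall k, Rabs (f k) <= g k) -> summ g -> summ f.
Proof. intros H Hg. unfold summ. apply (ser_le _ (zs (fun k => Rabs (g k)))); auto.
  intro n. rewrite Rabs_pos_eq by apply zs_abs_nonneg. unfold zs. destruct (Nat.eqb n 0).
  - eapply Rle_trans. apply H. apply Rle_abs.
  - pose proof (H (Z.of_nat n)). pose proof (H (- Z.of_nat n)%Z). pose proof (Rle_abs (g (Z.of_nat n))). pose proof (Rle_abs (g (- Z.of_nat n)%Z)). lra.
Qed.

Lemma summ_plus f g : summ f -> summ g -> summ (fun k => f k + g k).
Proof. intros Hf Hg. unfold summ.
  apply (ser_le _ (fun n => zs (fun k => Rabs (f k)) n + zs (fun k => Rabs (g k)) n)).
  2: apply (ex_series_plus _ _ Hf Hg).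
  intro n. rewrite Rabs_pos_eq by apply zs_abs_nonneg. unfold zs. destruct (Nat.eqb n 0).
  apply Rabs_triang.
  pose proof (Rabs_triang (f (Z.of_nat n)) (g (Z.of_nat n))). pose proof (Rabs_triang (f (- Z.of_nat n)%Z) (g (- Z.of_nat n)%Z)). lra.
Qed.

Lemma summ_scal c f : summ f -> summ (fun k => c * f k).
Proof. intros Hf. unfold summ.
  apply (ser_le _ (fun n => Rabs c * zs (fun k => Rabs (f k)) n)).
  2: apply (ex_series_scal_l _ _ Hf).
  intro n. rewrite Rabs_pos_eq by apply zs_abs_nonneg. unfold zs. destruct (Nat.eqb n 0);
  rewrite ?Rabs_mult; nra.
Qed.

Lemma zsum_plus f g : summ f -> summ g -> zsum (fun k => f k + g k) = zsum f + zsum g.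
Proof. intros Hf Hg. rewrite !zsum_zs. rewrite <- Series_plus by (apply summ_ex; auto).
  apply Series_ext. intro n. unfold zs. destruct (Nat.eqb n 0); ring. Qed.

Lemma zsum_scal c f : zsum (fun k => c * f k) = c * zsum f.
Proof. rewrite !zsum_zs. rewrite <- Series_scal_l. apply Series_ext. intro n. unfold zs. destruct (Nat.eqb n 0); ring. Qed.

Lemma is_series_of_lim a (l : R) : is_lim_seq (sum_n a) l -> is_series a l.
Proof. intro H. exact H. Qed.

Lemma sum_n_S' (a : nat -> R) n : sum_n a (S n) = sum_n a n + a (S n).
Proof. rewrite sum_Sn. reflexivity. Qed.
Lemma sum_n_0' (a : nat -> R) : sum_n a 0 = a 0%nat.
Proof. apply sum_O. Qed.

Lemma psum_shift1 f N :
  sum_n (zs (fun k => f (k + 1)%Z)) N = sum_n (zs f) N + f (Z.of_nat N + 1)%Z - f (- Z.of_nat N)%Z.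
Proof.
  induction N.
  - rewrite !sum_n_0'. unfold zs. simpl. ring.
  - rewrite !sum_n_S', IHN. unfold zs. simpl Nat.eqb. cbv iota.
    replace (Z.of_nat (S N) + 1)%Z with (Z.of_nat N + 1 + 1)%Z by lia.
    replace (- Z.of_nat (S N) + 1)%Z with (- Z.of_nat N)%Z by lia.
    replace (Z.of_nat (S N)) with (Z.of_nat N + 1)%Z by lia.
    replace (- (Z.of_nat N + 1))%Z with (- Z.of_nat N - 1)%Z by lia.
    replace (- Z.of_nat N - 1)%Z with (- Z.of_nat N + - 1)%Z by lia. lra.
Qed.

Lemma psum_shiftm1 f N :
  sum_n (zs (fun k => f (k - 1)%Z)) N = sum_n (zs f) N + f (- Z.of_nat N - 1)%Z - f (Z.of_nat N).
Proof.
  induction N.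
  - rewrite !sum_n_0'. unfold zs. simpl. lra.
  - rewrite !sum_n_S', IHN. unfold zs. simpl Nat.eqb. cbv iota.
    replace (Z.of_nat (S N) - 1)%Z with (Z.of_nat N)%Z by lia.
    replace (- Z.of_nat (S N) - 1)%Z with (- Z.of_nat N - 1 - 1)%Z by lia.
    replace (- Z.of_nat (S N))%Z with (- Z.of_nat N - 1)%Z by lia.
    lra.
Qed.

Lemma summ_tails f : summ f ->
  is_lim_seq (fun N => f (Z.of_nat N)) 0 /\ is_lim_seq (fun N => f (- Z.of_nat N)%Z) 0.
Proof.
  intro H. pose proof (ex_series_lim_0 _ H) as L.
  assert (Lm : is_lim_seq (fun n => - zs (fun k => Rabs (f k)) n) 0).
  { pose proof (proj1 (is_lim_seq_opp _ _) L) as L'. simpl in L'. rewrite Ropp_0 in L'. exact L'. }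
  split.
  - apply (is_lim_seq_le_le (fun n => - zs (fun k => Rabs (f k)) n) _ (zs (fun k => Rabs (f k)))); auto.
    intro n. enough (Rabs (f (Z.of_nat n)) <= zs (fun k => Rabs (f k)) n) by (apply Rabs_le_between in H0; lra) .
    unfold zs. destruct (Nat.eqb_spec n 0). subst. simpl. lra. pose proof (Rabs_pos (f (- Z.of_nat n)%Z)). lra.
  - apply (is_lim_seq_le_le (fun n => - zs (fun k => Rabs (f k)) n) _ (zs (fun k => Rabs (f k)))); auto.
    intro n. enough (Rabs (f (- Z.of_nat n)%Z) <= zs (fun k => Rabs (f k)) n) by (apply Rabs_le_between in H0; lra) .
    unfold zs. destruct (Nat.eqb_spec n 0). subst. simpl. lra. pose proof (Rabs_pos (f (Z.of_nat n))). lra.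
Qed.

Lemma summ_tails' f : summ f ->
  is_lim_seq (fun N => f (Z.of_nat N + 1)%Z) 0 /\ is_lim_seq (fun N => f (- Z.of_nat N - 1)%Z) 0.
Proof.
  intro H. destruct (summ_tails f H) as [H1 H2]. split.
  - apply is_lim_seq_incr_1 in H1. eapply is_lim_seq_ext. 2: exact H1. intro n. simpl. f_equal. lia.
  - apply is_lim_seq_incr_1 in H2. eapply is_lim_seq_ext. 2: exact H2. intro n. simpl. f_equal. lia.
Qed.

Lemma summ_abs f : summ f -> summ (fun k => Rabs (f k)).
Proof. unfold summ. apply ex_series_ext. intro n. unfold zs. destruct (Nat.eqb n 0); rewrite ?Rabs_Rabsolu; reflexivity. Qed.

Lemma shift1 f : summ f -> summ (fun k => f (k + 1)%Z) /\ zsum (fun k => f (k + 1)%Z) = zsum f.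
Proof.
  intro H. split.
  - destruct (summ_tails' _ (summ_abs f H)) as [T1 _]. destruct (summ_tails _ (summ_abs f H)) as [_ T2].
    exists (Series (zs (fun k => Rabs (f k)))). apply is_series_of_lim.
    eapply is_lim_seq_ext. intro N. symmetry. apply (psum_shift1 (fun k => Rabs (f k)) N).
    replace (Series (zs (fun k => Rabs (f k)))) with (Series (zs (fun k => Rabs (f k))) + 0 - 0) by ring.
    apply is_lim_seq_minus'. apply is_lim_seq_plus'. apply (Series_correct _ H). exact T1. exact T2.
  - destruct (summ_tails' _ H) as [T1 _]. destruct (summ_tails _ H) as [_ T2].
    rewrite !zsum_zs. apply is_series_unique. apply is_series_of_lim.
    eapply is_lim_seq_ext. intro N. symmetry. apply (psum_shift1 f N).
    replace (Series (zs f)) with (Series (zs f) + 0 - 0) at 1 by ring.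
    apply is_lim_seq_minus'. apply is_lim_seq_plus'. apply (Series_correct _ (summ_ex _ H)). exact T1. exact T2.
Qed.

Lemma shiftm1 f : summ f -> summ (fun k => f (k - 1)%Z) /\ zsum (fun k => f (k - 1)%Z) = zsum f.
Proof.
  intro H. split.
  - destruct (summ_tails' _ (summ_abs f H)) as [_ T1]. destruct (summ_tails _ (summ_abs f H)) as [T2 _].
    exists (Series (zs (fun k => Rabs (f k)))). apply is_series_of_lim.
    eapply is_lim_seq_ext. intro N. symmetry. apply (psum_shiftm1 (fun k => Rabs (f k)) N).
    replace (Series (zs (fun k => Rabs (f k)))) with (Series (zs (fun k => Rabs (f k))) + 0 - 0) by ring.
    apply is_lim_seq_minus'. apply is_lim_seq_plus'. apply (Series_correct _ H). exact T1. exact T2.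
  - destruct (summ_tails' _ H) as [_ T1]. destruct (summ_tails _ H) as [T2 _].
    rewrite !zsum_zs. apply is_series_unique. apply is_series_of_lim.
    eapply is_lim_seq_ext. intro N. symmetry. apply (psum_shiftm1 f N).
    replace (Series (zs f)) with (Series (zs f) + 0 - 0) at 1 by ring.
    apply is_lim_seq_minus'. apply is_lim_seq_plus'. apply (Series_correct _ (summ_ex _ H)). exact T1. exact T2.
Qed.

Lemma shift_gen c : forall f, summ f -> summ (fun k => f (k + c)%Z) /\ zsum (fun k => f (k + c)%Z) = zsum f.
Proof.
  induction c using Z.peano_ind; intros f H.
  - split. eapply summ_ext; [|exact H]. intro k. f_equal. lia.
    apply zsum_ext. intro k. f_equal. lia.
  - destruct (IHc f H) as [S1 E1]. destruct (shift1 _ S1) as [S2 E2]. split.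
    + eapply summ_ext; [|exact S2]. intro k. simpl. f_equal. lia.
    + rewrite <- E1, <- E2. apply zsum_ext. intro k. f_equal. lia.
  - destruct (IHc f H) as [S1 E1]. destruct (shiftm1 _ S1) as [S2 E2]. split.
    + eapply summ_ext; [|exact S2]. intro k. simpl. f_equal. lia.
    + rewrite <- E1, <- E2. apply zsum_ext. intro k. f_equal. lia.
Qed.

Definition nice (p : Z -> R) : Prop :=
  (forall k, 0 <= p k) /\ summ p /\ summ (fun k => IZR k ^ 2 * p k).
Definition M0 p := zsum p.
Definition M1 p := zsum (fun k => IZR k * p k).
Definition M2 p := zsum (fun k => IZR k ^ 2 * p k).

Lemma nice_summ1 p : nice p -> summ (fun k => IZR k * p k).
Proof.
  intros [Hp [H0 H2]]. apply (summ_le _ (fun k => p k + IZR k ^ 2 * p k)).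
  2: apply summ_plus; auto.
  intro k. rewrite Rabs_mult, (Rabs_pos_eq (p k)) by auto.
  assert (Rabs (IZR k) <= 1 + IZR k ^ 2).
  { destruct (Rle_dec 0 (IZR k)). rewrite Rabs_pos_eq by auto. nra. rewrite Rabs_left by lra. nra. }
  specialize (Hp k). nra.
Qed.

Lemma zsum_shift_mul (h : Z -> R) p c :
  summ (fun k => h (k + c)%Z * p k) ->
  summ (fun k => h k * p (k - c)%Z) /\ zsum (fun k => h k * p (k - c)%Z) = zsum (fun k => h (k + c)%Z * p k).
Proof.
  intro H. destruct (shift_gen (- c) _ H) as [S1 E1]. split.
  - eapply summ_ext; [|exact S1]. intro k. simpl. replace (k + - c + c)%Z with k by lia. replace (k + - c)%Z with (k - c)%Z by lia. reflexivity.
  - rewrite <- E1. apply zsum_ext. intro k. replace (k + - c + c)%Z with k by lia. replace (k + - c)%Z with (k - c)%Z by lia. reflexivity.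
Qed.

Lemma nice_shift p c : nice p ->
  nice (fun k => p (k - c)%Z) /\ M0 (fun k => p (k - c)%Z) = M0 p /\
  M1 (fun k => p (k - c)%Z) = M1 p + IZR c * M0 p /\
  M2 (fun k => p (k - c)%Z) = M2 p + 2 * IZR c * M1 p + IZR c ^ 2 * M0 p.
Proof.
  intro Hn. pose proof (nice_summ1 p Hn) as H1. destruct Hn as [Hp [H0 H2]].
  destruct (zsum_shift_mul (fun _ => 1) p c) as [S0 E0].
  { eapply summ_ext; [|exact H0]. intro k. cbv beta. ring. }
  destruct (zsum_shift_mul (fun k => IZR k) p c) as [S1 E1].
  { eapply summ_ext; [|exact (summ_plus _ _ H1 (summ_scal (IZR c) _ H0))]. intro k. cbv beta. rewrite plus_IZR. ring. }
  destruct (zsum_shift_mul (fun k => IZR k ^ 2) p c) as [S2 E2].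
  { eapply summ_ext; [|exact (summ_plus _ _ H2 (summ_plus _ _ (summ_scal (2 * IZR c) _ H1) (summ_scal (IZR c ^ 2) _ H0)))].
    intro k. cbv beta. rewrite plus_IZR. ring. }
  split; [|split; [|split]].
  - split; [|split].
    + intro k. apply Hp.
    + eapply summ_ext; [|exact S0]. intro k. cbv beta. ring.
    + exact S2.
  - unfold M0. transitivity (zsum (fun k => 1 * p (k - c)%Z)). apply zsum_ext; intro; cbv beta; ring.
    rewrite E0. apply zsum_ext; intro; cbv beta; ring.
  - unfold M1, M0. rewrite E1.
    transitivity (zsum (fun k => IZR k * p k + IZR c * p k)).
    apply zsum_ext; intro k; rewrite plus_IZR; ring.
    rewrite zsum_plus by (try apply summ_scal; assumption). rewrite zsum_scal. reflexivity.
  - unfold M2, M1, M0. rewrite E2.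
    transitivity (zsum (fun k => IZR k ^ 2 * p k + ((2 * IZR c) * (IZR k * p k) + IZR c ^ 2 * p k))).
    apply zsum_ext; intro k; rewrite plus_IZR; ring.
    assert (SS : summ (fun k => (2 * IZR c) * (IZR k * p k) + IZR c ^ 2 * p k)) by (apply summ_plus; apply summ_scal; assumption).
    rewrite zsum_plus by assumption.
    rewrite zsum_plus by (apply summ_scal; assumption). rewrite !zsum_scal. ring.
Qed.

Lemma nice_mix p q : nice p -> nice q ->
  nice (fun k => (p k + q k) / 2) /\ M0 (fun k => (p k + q k) / 2) = (M0 p + M0 q) / 2 /\
  M1 (fun k => (p k + q k) / 2) = (M1 p + M1 q) / 2 /\
  M2 (fun k => (p k + q k) / 2) = (M2 p + M2 q) / 2.
Proof.
  intros Hp Hq. pose proof (nice_summ1 p Hp) as P1. pose proof (nice_summ1 q Hq) as Q1.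
  destruct Hp as [Pp [P0 P2]]. destruct Hq as [Qp [Q0 Q2]].
  assert (G : forall f g, summ f -> summ g -> summ (fun k => / 2 * f k + / 2 * g k)).
  { intros f g Hf Hg. apply summ_plus; apply summ_scal; auto. }
  assert (Z : forall f g, summ f -> summ g -> zsum (fun k => / 2 * f k + / 2 * g k) = (zsum f + zsum g) / 2).
  { intros f g Hf Hg. rewrite zsum_plus by (apply summ_scal; auto). rewrite !zsum_scal. field. }
  split; [|split; [|split]].
  - split; [|split].
    + intro k. specialize (Pp k); specialize (Qp k). lra.
    + eapply summ_ext; [|exact (G _ _ P0 Q0)]. intro k. cbv beta. field.
    + eapply summ_ext; [|exact (G _ _ P2 Q2)]. intro k. cbv beta. field.
  - unfold M0. rewrite <- Z by auto. apply zsum_ext. intro k. cbv beta. field.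
  - unfold M1. rewrite <- Z by auto. apply zsum_ext. intro k. cbv beta. field.
  - unfold M2. rewrite <- Z by auto. apply zsum_ext. intro k. cbv beta. field.
Qed.

Lemma mix_shift p q c1 c2 r : nice p -> nice q ->
  (forall k, r k = (p (k - c1)%Z + q (k - c2)%Z) / 2) ->
  nice r /\ M0 r = (M0 p + M0 q) / 2 /\
  M1 r = (M1 p + IZR c1 * M0 p + M1 q + IZR c2 * M0 q) / 2 /\
  M2 r = (M2 p + 2 * IZR c1 * M1 p + IZR c1 ^ 2 * M0 p + M2 q + 2 * IZR c2 * M1 q + IZR c2 ^ 2 * M0 q) / 2.
Proof.
  intros Hp Hq Hr.
  destruct (nice_shift p c1 Hp) as [Np [E0p [E1p E2p]]].
  destruct (nice_shift q c2 Hq) as [Nq [E0q [E1q E2q]]].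
  destruct (nice_mix _ _ Np Nq) as [N [F0 [F1 F2]]].
  assert (Er : r = (fun k => (p (k - c1)%Z + q (k - c2)%Z) / 2)).
  { apply functional_extensionality. exact Hr. }
  subst r. split; [exact N|]. rewrite F0, F1, F2, E0p, E0q, E1p, E1q, E2p, E2q.
  split; [|split]; field.
Qed.

Lemma var_formula p m : nice p -> M0 p = 1 ->
  zsum (fun k => (IZR k - m) ^ 2 * p k) = M2 p - 2 * m * M1 p + m ^ 2.
Proof.
  intros Hn H0. pose proof (nice_summ1 p Hn) as S1. destruct Hn as [_ [S0 S2]].
  transitivity (zsum (fun k => (IZR k ^ 2 * p k + (- 2 * m) * (IZR k * p k)) + m ^ 2 * p k)).
  apply zsum_ext. intro k. cbv beta. ring.
  rewrite zsum_plus, zsum_plus, !zsum_scal. unfold M0 in H0. unfold M1, M2. rewrite H0. ring.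
  auto. apply summ_scal; auto. apply summ_plus; auto. apply summ_scal; auto. apply summ_scal; auto.
Qed.

Lemma fs01 f : (forall k, (k < 0 \/ 1 < k)%Z -> f k = 0) -> is_series (zs f) (f 0%Z + f 1%Z).
Proof.
  intro H. apply is_series_of_lim. apply is_lim_seq_ext_loc with (u := fun _ => f 0%Z + f 1%Z).
  2: apply is_lim_seq_const.
  exists 1%nat. intros n Hn. induction n. lia.
  destruct n.
  - rewrite sum_n_S', sum_n_0'. unfold zs. simpl. rewrite (H (-1)%Z) by lia. ring.
  - rewrite sum_n_S', <- IHn by lia. unfold zs. simpl Nat.eqb. cbv iota.
    rewrite (H (Z.of_nat (S (S n)))) by lia. rewrite (H (- Z.of_nat (S (S n)))%Z) by lia. ring.
Qed.

Lemma fs01_summ f : (forall k, (k < 0 \/ 1 < k)%Z -> f k = 0) -> summ f /\ zsum f = f 0%Z + f 1%Z.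
Proof.
  intro H. split.
  - eexists. apply fs01. intros k Hk. rewrite H; auto. apply Rabs_R0.
  - rewrite zsum_zs. apply is_series_unique. apply fs01; auto.
Qed.

Lemma fs01_nice p : (forall k, 0 <= p k) -> (forall k, (k < 0 \/ 1 < k)%Z -> p k = 0) ->
  nice p /\ M0 p = p 0%Z + p 1%Z /\ M1 p = p 1%Z /\ M2 p = p 1%Z.
Proof.
  intros Hp H.
  assert (H1 : forall k, (k < 0 \/ 1 < k)%Z -> IZR k * p k = 0) by (intros k Hk; rewrite H; auto; ring).
  assert (H2 : forall k, (k < 0 \/ 1 < k)%Z -> IZR k ^ 2 * p k = 0) by (intros k Hk; rewrite H; auto; ring).
  destruct (fs01_summ _ H) as [S0 E0]. destruct (fs01_summ _ H1) as [S1 E1]. destruct (fs01_summ _ H2) as [S2 E2].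
  split. split; auto. unfold M0, M1, M2. rewrite E0, E1, E2. simpl. split; [|split]; ring.
Qed.

Definition ma (u : nat) : R := if Nat.odd u then 1/2 else 0.
Definition Inv (u : nat) : Prop :=
  nice (a u) /\ nice (b u) /\ M0 (a u) = 1 /\ M0 (b u) = 1 /\ M1 (a u) = ma u /\ M1 (b u) = - ma u.

Lemma a0_eq k : a 0 k = if Z.eqb 0 k then 1 else 0.
Proof. apply a_0. Qed.

Lemma nice0 : nice (a 0) /\ nice (b 0) /\ M0 (a 0) = 1 /\ M0 (b 0) = 1 /\ M1 (a 0) = 0 /\ M1 (b 0) = 0
  /\ M2 (a 0) = 0 /\ M2 (b 0) = 0.
Proof.
  assert (Ha : forall k, (k < 0 \/ 1 < k)%Z -> a 0 k = 0).
  { intros k Hk. rewrite a_0. destruct (Z.eqb_spec 0 k); auto; lia. }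
  assert (Hb : forall k, (k < 0 \/ 1 < k)%Z -> b 0 k = 0).
  { intros k Hk. rewrite b_0. destruct (Z.eqb_spec 0 k); auto; lia. }
  destruct (fs01_nice (a 0) (fun k => proj1 (a_bnd 0 k)) Ha) as [Na [A0 [A1 A2]]].
  destruct (fs01_nice (b 0) (fun k => proj1 (b_bnd 0 k)) Hb) as [Nb [B0 [B1 B2]]].
  rewrite A0, A1, A2, B0, B1, B2, !a_0, !b_0. simpl. split; [exact Na|]. split; [exact Nb|]. repeat split; lra.
Qed.

Lemma nice_a1 : nice (a 1) /\ M0 (a 1) = 1 /\ M1 (a 1) = 1/2 /\ M2 (a 1) = 1/2.
Proof.
  assert (Ha : forall k, (k < 0 \/ 1 < k)%Z -> a 1 k = 0).
  { intros k Hk. rewrite a_1. destruct (Z.eqb_spec 0 k), (Z.eqb_spec 1 k); try lia. lra. }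
  destruct (fs01_nice (a 1) (fun k => proj1 (a_bnd 1 k)) Ha) as [Na [A0 [A1 A2]]].
  rewrite A0, A1, A2, !a_1. simpl. split; [exact Na|]. repeat split; lra.
Qed.

Lemma b1_rec k : b 1 k = (a 1 k + b 1 (k + 1)%Z) / 2.
Proof. pose proof (b_2t1 0 k) as H. change (2 * 0 + 1)%nat with 1%nat in H. change (0 + 1)%nat with 1%nat in H. exact H. Qed.

Lemma b1_bound j : b 1 (- Z.of_nat j)%Z <= (1/2) ^ j.
Proof.
  induction j.
  - simpl. apply b_bnd.
  - rewrite b1_rec. rewrite a_1. destruct (Z.eqb_spec 0 (- Z.of_nat (S j))), (Z.eqb_spec 1 (- Z.of_nat (S j))); try lia.
    replace (- Z.of_nat (S j) + 1)%Z with (- Z.of_nat j)%Z by lia. simpl. lra.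
Qed.

Definition w (n : nat) : R := (INR n + 1) ^ 2 * (1/2) ^ n.

Lemma w_pos n : 0 < w n.
Proof. unfold w. apply Rmult_lt_0_compat. pose proof (pos_INR n). nra. apply pow_lt. lra. Qed.

Lemma ex_w : ex_series w.
Proof.
  assert (H : ex_series (fun n => Rabs (w n))).
  { apply (ex_series_DAlembert w (1/2)). lra. intro n. pose proof (w_pos n). lra.
    apply is_lim_seq_ext with (u := fun n => (1 + / INR (S n)) * (1 + / INR (S n)) * / 2).
    - intro n. rewrite Rabs_pos_eq. unfold w. rewrite !S_INR. simpl pow.
      assert (0 <= INR n) by apply pos_INR. field. split. apply pow_nonzero. lra. lra.
      left. unfold Rdiv. apply Rmult_lt_0_compat. apply w_pos. apply Rinv_0_lt_compat, w_pos.
    - replace (1/2) with ((1 + 0) * (1 + 0) * / 2) by field.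
      assert (L : is_lim_seq (fun n => 1 + / INR (S n)) (1 + 0)) by (apply is_lim_seq_plus'; [apply is_lim_seq_const| apply lim_inv_S]).
      apply is_lim_seq_mult'. apply is_lim_seq_mult'; exact L.
      apply is_lim_seq_const. }
  eapply ex_series_ext; [|exact H]. intro n. apply Rabs_pos_eq. left; apply w_pos.
Qed.

Lemma summ_by_w f : (forall j, Rabs (f (Z.of_nat j)) <= 2 * w j) -> (forall j, Rabs (f (- Z.of_nat j)%Z) <= 2 * w j) -> summ f.
Proof.
  intros H1 H2. unfold summ. apply (ser_le _ (fun n => 4 * w n)).
  2: { apply (ex_series_ext (fun n => w n * 4)). intro; apply Rmult_comm. apply ex_series_scal_r, ex_w. }
  intro n. rewrite Rabs_pos_eq by apply zs_abs_nonneg. unfold zs. destruct (Nat.eqb_spec n 0).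
  - subst. specialize (H1 0%nat). pose proof (w_pos 0). simpl in *. lra.
  - specialize (H1 n). specialize (H2 n). lra.
Qed.

Lemma pow_half_le_w j : (1/2) ^ j <= 2 * w j.
Proof. unfold w. pose proof (pos_INR j). assert (0 < (1/2)^j) by (apply pow_lt; lra). nra. Qed.

Lemma nice_b1 : nice (b 1).
Proof.
  split; [|split].
  - intro k. apply b_bnd.
  - apply summ_by_w.
    + intro j. rewrite Rabs_pos_eq by apply b_bnd. destruct j as [|[|j]].
      * pose proof (b_bnd 1 0). unfold w. simpl. lra.
      * pose proof (b_bnd 1 1). unfold w. simpl. lra.
      * rewrite b_1_hi by lia. left; apply Rmult_lt_0_compat; [lra|apply w_pos].
    + intro j. rewrite Rabs_pos_eq by apply b_bnd. eapply Rle_trans. apply b1_bound. apply pow_half_le_w.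
  - apply summ_by_w.
    + intro j. rewrite Rabs_mult, (Rabs_pos_eq (b 1 _)) by apply b_bnd. destruct j as [|[|j]].
      * simpl. rewrite !Rmult_0_l, Rabs_R0. pose proof (w_pos 0). lra.
      * pose proof (b_bnd 1 1). unfold w. simpl. rewrite Rmult_1_l, Rmult_1_l, Rabs_R1. lra.
      * rewrite b_1_hi by lia. rewrite Rmult_0_r. left; apply Rmult_lt_0_compat; [lra|apply w_pos].
    + intro j. rewrite Rabs_mult, (Rabs_pos_eq (b 1 _)) by apply b_bnd.
      rewrite Rabs_pos_eq by (apply pow2_ge_0).
      rewrite opp_IZR, <- INR_IZR_INZ. replace ((- INR j) ^ 2) with (INR j ^ 2) by ring.
      pose proof (b1_bound j). pose proof (b_bnd 1 (- Z.of_nat j)). pose proof (pos_INR j).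
      assert (0 < (1/2)^j) by (apply pow_lt; lra). unfold w.
      apply Rle_trans with (INR j ^ 2 * (1/2)^j). apply Rmult_le_compat_l. apply pow2_ge_0. auto. nra.
Qed.

Lemma b1_mom : M0 (b 1) = 1 /\ M1 (b 1) = -1/2 /\ M2 (b 1) = 5/2.
Proof.
  destruct nice_a1 as [Na [A0 [A1 A2]]].
  destruct (mix_shift (a 1) (b 1) 0 (-1) (b 1) Na nice_b1) as [_ [E0 [E1 E2]]].
  { intro k. rewrite b1_rec at 1. rewrite Z.sub_0_r. replace (k - -1)%Z with (k + 1)%Z by lia. reflexivity. }
  rewrite A0, A1, A2 in *. simpl IZR in *.
  assert (B0 : M0 (b 1) = 1) by lra. rewrite B0 in *.
  assert (B1 : M1 (b 1) = -1/2) by lra. rewrite B1 in *. repeat split; auto. lra.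
Qed.

Lemma odd_2m m : Nat.odd (2 * m) = false.
Proof. pose proof (oddZ_0 m) as H. unfold oddZ in H. destruct (Nat.odd (2 * m)); congruence. Qed.
Lemma odd_2m1 m : Nat.odd (2 * m + 1) = true.
Proof. pose proof (oddZ_1 m) as H. unfold oddZ in H. destruct (Nat.odd (2 * m + 1)); congruence. Qed.
Lemma IZR_oddZ s : IZR (oddZ s) = if Nat.odd s then 1 else 0.
Proof. unfold oddZ. destruct (Nat.odd s); reflexivity. Qed.
Lemma IZR_evenZ s : IZR (evenZ s) = if Nat.odd s then 0 else 1.
Proof. unfold evenZ. destruct (Nat.odd s); reflexivity. Qed.

Lemma rec_a2t s : nice (a s) -> nice (b s) -> nice (a (2 * s)) /\ M0 (a (2 * s)) = (M0 (a s) + M0 (b s)) / 2 /\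
  M1 (a (2 * s)) = (M1 (a s) + M1 (b s)) / 2 /\ M2 (a (2 * s)) = (M2 (a s) + M2 (b s)) / 2.
Proof.
  intros Ha Hb. destruct (mix_shift (a s) (b s) 0 0 (a (2 * s)) Ha Hb) as [N [E0 [E1 E2]]].
  { intro k. rewrite a_2t. rewrite !Z.sub_0_r. reflexivity. }
  simpl IZR in *. split; auto. rewrite E0, E1, E2. repeat split; lra.
Qed.

Lemma rec_b2t s : nice (a s) -> nice (b s) -> nice (b (2 * s)) /\ M0 (b (2 * s)) = (M0 (a s) + M0 (b s)) / 2 /\
  M1 (b (2 * s)) = (M1 (a s) + IZR (oddZ s) * M0 (a s) + M1 (b s) + (IZR (evenZ s) - 1) * M0 (b s)) / 2 /\
  M2 (b (2 * s)) = (M2 (a s) + 2 * IZR (oddZ s) * M1 (a s) + IZR (oddZ s) ^ 2 * M0 (a s)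
     + M2 (b s) + 2 * (IZR (evenZ s) - 1) * M1 (b s) + (IZR (evenZ s) - 1) ^ 2 * M0 (b s)) / 2.
Proof.
  intros Ha Hb. destruct (mix_shift (a s) (b s) (oddZ s) (evenZ s - 1) (b (2 * s)) Ha Hb) as [N [E0 [E1 E2]]].
  { intro k. rewrite b_2t. do 3 f_equal. lia. }
  rewrite minus_IZR in *. simpl IZR in *. split; auto.
Qed.

Lemma rec_a2t1 s : nice (a s) -> nice (b s) -> nice (a (2 * s + 1)) /\ M0 (a (2 * s + 1)) = (M0 (a s) + M0 (b s)) / 2 /\
  M1 (a (2 * s + 1)) = (M1 (a s) + IZR (oddZ s) * M0 (a s) + M1 (b s) + IZR (evenZ s) * M0 (b s)) / 2 /\
  M2 (a (2 * s + 1)) = (M2 (a s) + 2 * IZR (oddZ s) * M1 (a s) + IZR (oddZ s) ^ 2 * M0 (a s)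
     + M2 (b s) + 2 * IZR (evenZ s) * M1 (b s) + IZR (evenZ s) ^ 2 * M0 (b s)) / 2.
Proof.
  intros Ha Hb. destruct (mix_shift (a s) (b s) (oddZ s) (evenZ s) (a (2 * s + 1)) Ha Hb) as [N [E0 [E1 E2]]].
  { intro k. rewrite a_2t1. reflexivity. }
  split; auto.
Qed.

Lemma rec_b2t1 s : nice (a (s + 1)) -> nice (b (s + 1)) -> nice (b (2 * s + 1)) /\
  M0 (b (2 * s + 1)) = (M0 (a (s + 1)) + M0 (b (s + 1))) / 2 /\
  M1 (b (2 * s + 1)) = (M1 (a (s + 1)) + M1 (b (s + 1)) - M0 (b (s + 1))) / 2 /\
  M2 (b (2 * s + 1)) = (M2 (a (s + 1)) + M2 (b (s + 1)) - 2 * M1 (b (s + 1)) + M0 (b (s + 1))) / 2.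
Proof.
  intros Ha Hb. destruct (mix_shift (a (s + 1)) (b (s + 1)) 0 (-1) (b (2 * s + 1)) Ha Hb) as [N [E0 [E1 E2]]].
  { intro k. rewrite b_2t1. rewrite Z.sub_0_r. replace (k - -1)%Z with (k + 1)%Z by lia. reflexivity. }
  simpl IZR in *. split; auto. rewrite E0, E1, E2. repeat split; lra.
Qed.

Lemma Inv_all u : Inv u.
Proof.
  induction u as [u IH] using (well_founded_induction lt_wf).
  destruct (Nat.Even_or_Odd u) as [[s ->]|[s ->]].
  - destruct (Nat.eq_dec s 0) as [->|Hs].
    + destruct nice0 as [Na [Nb [A0 [B0 [A1 [B1 _]]]]]]. unfold Inv, ma. simpl.
      split; [exact Na|]. split; [exact Nb|]. repeat split; lra.
    + destruct (IH s ltac:(lia)) as [Na [Nb [A0 [B0 [A1 B1]]]]].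
      destruct (rec_a2t s Na Nb) as [Na' [A0' [A1' _]]].
      destruct (rec_b2t s Na Nb) as [Nb' [B0' [B1' _]]].
      unfold Inv. split; auto. split; auto.
      rewrite A0', B0', A1', B1', A0, B0, A1, B1, IZR_oddZ, IZR_evenZ. unfold ma. rewrite odd_2m.
      destruct (Nat.odd s); repeat split; lra.
  - destruct (Nat.eq_dec s 0) as [->|Hs].
    + destruct nice_a1 as [Na [A0 [A1 _]]]. destruct b1_mom as [B0 [B1 _]]. unfold Inv, ma. simpl.
      split; [exact Na|]. split; [exact nice_b1|]. repeat split; lra.
    + destruct (IH s ltac:(lia)) as [Na [Nb [A0 [B0 [A1 B1]]]]].
      destruct (IH (s + 1)%nat ltac:(lia)) as [Na1 [Nb1 [A01 [B01 [A11 B11]]]]].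
      destruct (rec_a2t1 s Na Nb) as [Na' [A0' [A1' _]]].
      destruct (rec_b2t1 s Na1 Nb1) as [Nb' [B0' [B1' _]]].
      unfold Inv. split; auto. split; auto.
      rewrite A0', B0', A1', B1', A0, B0, A1, B1, A01, B01, A11, B11, IZR_oddZ, IZR_evenZ.
      unfold ma. rewrite odd_2m1.
      destruct (Nat.odd s); repeat split; lra.
Qed.

Lemma ma_val u : ma u ^ 2 = if Nat.odd u then 1/4 else 0.
Proof. unfold ma. destruct (Nat.odd u); field. Qed.

Lemma malpha u : m_alpha u = ma u.
Proof. destruct (Inv_all u) as [_ [_ [_ [_ [H _]]]]]. exact H. Qed.
Lemma mbeta u : m_beta u = - ma u.
Proof. destruct (Inv_all u) as [_ [_ [_ [_ [_ H]]]]]. exact H. Qed.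

Lemma va u : v_alpha u = M2 (a u) - ma u ^ 2.
Proof. destruct (Inv_all u) as [Na [_ [A0 [_ [A1 _]]]]].
  unfold v_alpha. rewrite malpha. rewrite var_formula; auto. rewrite A1. ring. Qed.
Lemma vb u : v_beta u = M2 (b u) - ma u ^ 2.
Proof. destruct (Inv_all u) as [_ [Nb [_ [B0 [_ B1]]]]].
  unfold v_beta. rewrite mbeta. rewrite var_formula; auto. rewrite B1. ring. Qed.

Lemma VA_e s : v_alpha (2 * s) = (v_alpha s + v_beta s) / 2 + ma s ^ 2.
Proof.
  destruct (Inv_all s) as [Na [Nb _]]. destruct (rec_a2t s Na Nb) as [_ [_ [_ E]]].
  rewrite !va, !vb, E. unfold ma. rewrite odd_2m. destruct (Nat.odd s); field.
Qed.

Lemma VB_e s : v_beta (2 * s) = (v_alpha s + v_beta s) / 2 + (if Nat.odd s then 9/4 else 0).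
Proof.
  destruct (Inv_all s) as [Na [Nb [A0 [B0 [A1 B1]]]]]. destruct (rec_b2t s Na Nb) as [_ [_ [_ E]]].
  rewrite !va, !vb, E, A0, B0, A1, B1, IZR_oddZ, IZR_evenZ. unfold ma. rewrite odd_2m. destruct (Nat.odd s); field.
Qed.

Lemma VA_o s : v_alpha (2 * s + 1) = (v_alpha s + v_beta s) / 2 + (if Nat.odd s then 1 else 1/4).
Proof.
  destruct (Inv_all s) as [Na [Nb [A0 [B0 [A1 B1]]]]]. destruct (rec_a2t1 s Na Nb) as [_ [_ [_ E]]].
  rewrite !va, !vb, E, A0, B0, A1, B1, IZR_oddZ, IZR_evenZ. unfold ma. rewrite odd_2m1. destruct (Nat.odd s); field.
Qed.

Lemma VB_o s : v_beta (2 * s + 1) = (v_alpha (s + 1) + v_beta (s + 1)) / 2 + (if Nat.odd s then 1/4 else 1).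
Proof.
  destruct (Inv_all (s + 1)) as [Na [Nb [A0 [B0 [A1 B1]]]]]. destruct (rec_b2t1 s Na Nb) as [_ [_ [_ E]]].
  rewrite !va, !vb, E, B0, B1. unfold ma. rewrite odd_2m1.
  replace (Nat.odd (s + 1)) with (negb (Nat.odd s)) by (rewrite Nat.add_1_r, Nat.odd_succ, <- Nat.negb_odd; reflexivity).
  destruct (Nat.odd s); simpl; field.
Qed.

Ltac red6 := unfold mv, Mat0, Mat1, Vvec, Mvec, vec6; cbn [sum_f_R0 Nat.ltb Nat.leb Nat.eqb orb].
Ltac fin := unfold ma in *; rewrite ?odd_2m, ?odd_2m1 in *; lra.

Lemma e22 t : (2 * t + 2 = 2 * (t + 1))%nat. Proof. lia. Qed.
Lemma e1 t : (2 * t + 1 + 1 = 2 * t + 2)%nat. Proof. lia. Qed.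
Lemma e4 t : (2 * (2 * t + 1) + 2 = 2 * (2 * t + 2))%nat. Proof. lia. Qed.
Lemma e5 t : (2 * (2 * t) + 2 = 2 * (2 * t + 1))%nat. Proof. lia. Qed.

Theorem proposition3p4 :
  (forall t : nat, forall i : nat, (i < 6)%nat ->
     Mvec t i = vec6 0 0 (1/2) (-1/2) 0 0 i) /\
  (forall t : nat, forall i : nat, (i < 6)%nat ->
     Vvec (2 * t) i = (1/2) * mv Mat0 (Vvec t) i + (1/4) * vec6 0 0 1 4 1 9 i) /\
  (forall t : nat, forall i : nat, (i < 6)%nat ->
     Vvec (2 * t + 1) i = (1/2) * mv Mat1 (Vvec t) i + (1/4) * vec6 1 9 4 1 0 0 i) /\
  (forall i : nat, (i < 6)%nat -> Vvec 0 i = (1/4) * vec6 0 0 1 9 6 14 i).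
Proof.
  split; [|split; [|split]].
  - intros t i Hi. destruct i as [|[|[|[|[|[|i]]]]]]; [..|lia]; red6;
      rewrite ?malpha, ?mbeta; rewrite ?e22; unfold ma; rewrite ?odd_2m, ?odd_2m1; lra.
  - intros t i Hi. destruct i as [|[|[|[|[|[|i]]]]]]; [..|lia]; red6.
    + rewrite VA_e. fin.
    + rewrite VB_e. fin.
    + rewrite VA_o. fin.
    + rewrite VB_o. fin.
    + rewrite e5, VA_e. fin.
    + rewrite e5, VB_e. fin.
  - intros t i Hi. destruct i as [|[|[|[|[|[|i]]]]]]; [..|lia]; red6.
    + rewrite VA_e. fin.
    + rewrite VB_e. fin.
    + rewrite VA_o. fin.
    + rewrite VB_o, e1. fin.
    + rewrite e4, VA_e, e22. fin.
    + rewrite e4, VB_e, e22. fin.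
  - destruct nice0 as [_ [_ [_ [_ [_ [_ [A2 B2]]]]]]]. destruct nice_a1 as [_ [_ [_ A12]]]. destruct b1_mom as [_ [_ B12]].
    assert (v00 : v_alpha 0 = 0) by (rewrite va, A2; unfold ma; simpl; lra).
    assert (v01 : v_beta 0 = 0) by (rewrite vb, B2; unfold ma; simpl; lra).
    assert (v10 : v_alpha 1 = 1/4) by (rewrite va, A12; unfold ma; simpl; lra).
    assert (v11 : v_beta 1 = 9/4) by (rewrite vb, B12; unfold ma; simpl; lra).
    assert (v20 : v_alpha 2 = 6/4) by (change (v_alpha (2 * 1) = 6/4); rewrite (VA_e 1), v10, v11; unfold ma; simpl; lra).
    assert (v21 : v_beta 2 = 14/4) by (change (v_beta (2 * 1) = 14/4); rewrite (VB_e 1), v10, v11; simpl; lra).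
    intros i Hi. destruct i as [|[|[|[|[|[|i]]]]]]; [..|lia]; red6; simpl; lra.
Qed.
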